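(* Let $t>0$, $x\in\mathbb{R}$, let $v_0$ be continuous and bounded on $\mathbb{R}$, and let $c$ be continuous on $[0,\infty)\times\mathbb{R}$ with lower bound $m$, having an $x$-derivative $c_x$ on $]0,\infty)\times\mathbb{R}$ that extends continuously and boundedly to $[0,\infty)\times\mathbb{R}$. For integers $n\ge1$, $t_i=i/n$ and $w\in C_W$ define $$F_n(w)=\exp\Big(\frac n2\sum_{i=1}^n\big[(1-\mathrm{ch}(2t/n))w(t_i)^2+(1-\mathrm{ch}(2t/n)^{-1})w(t_{i-1})^2\big]\Big),$$ $$G_n(w)=\exp\Big(-\frac12\frac{\mathrm{sh}(2t/n)}{\mathrm{ch}(2t/n)}\sum_{j=0}^{n-1}\Big((n\,\mathrm{sh}(2t/n))^{1/2}w(t_j)+\frac{x}{\mathrm{ch}(2t/n)^j}\Big)^2\Big),$$ $$H_n(w)=\exp\Big(-\frac tn\sum_{j=0}^{n-1}c\Big(\frac{(n-j)t}{n},(n\,\mathrm{sh}(2t/n))^{1/2}w(j/n)+\frac{x}{\mathrm{ch}(2t/n)^j}\Big)\Big).$$ Then for all $w\in C_W$: (i) $0\le F_n(w)\le1$ and $\lim_{n\to\infty}F_n(w)=1$; (ii) $0\le G_n(w)\le1$ and $\lim_{n\to\infty}G_n(w)=\exp\big(-t\int_0^1(x+\sqrt{2t}\,w(s))^2ds\big)$; (iii) $0\le H_n(w)\le e^{-mt}$ and $\lim_{n\to\infty}H_n(w)=\exp\big(-t\int_0^1c(t(1-s),\sqrt{2t}\,w(s)+x)\,ds\big)$; (iv)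 $\big|v_0\big((n\,\mathrm{sh}(2t/n))^{1/2}w(1)+\frac{x}{\mathrm{ch}(2t/n)^n}\big)\big|\le\|v_0\|_\infty$ and $\lim_{n\to\infty}v_0\big((n\,\mathrm{sh}(2t/n))^{1/2}w(1)+\frac{x}{\mathrm{ch}(2t/n)^n}\big)=v_0(\sqrt{2t}\,w(1)+x)$.
   Context: $C_W$ is the set of real continuous functions $w$ on $[0,1]$ with $w(0)=0$. $\mathrm{ch},\mathrm{sh}$ are hyperbolic cosine and sine. *)

(* Defs.v *)
From Stdlib Require Import Reals.
From Coquelicot Require Import Coquelicot.
Open Scope R_scope.

(* C_W : real continuous functions on [0,1] with w(0)=0.
   Functions are represented as R -> R; only the values on [0,1] matter. *)
Definition in_CW (w : R -> R) : Prop :=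
  (forall s, 0 <= s <= 1 ->
     filterlim w (within (fun u => 0 <= u <= 1) (locally s)) (locally (w s)))
  /\ w 0 = 0.

Definition sup_norm (v : R -> R) : R :=
  real (Lub_Rbar (fun r => exists y, r = Rabs (v y))).

Definition cont_halfplane (f : R -> R -> R) : Prop :=
  forall s y, 0 <= s ->
    filterlim (fun p : R * R => f (fst p) (snd p))
      (within (fun p : R * R => 0 <= fst p) (locally (s, y)))
      (locally (f s y)).

Definition ch := cosh.
Definition sh := sinh.

Definition F_n (t : R) (n : nat) (w : R -> R) : R :=
  exp (INR n / 2 *
    sum_n_m (fun i =>
      (1 - ch (2 * t / INR n)) * (w (INR i / INR n)) ^ 2
      + (1 - / ch (2 * t / INR n)) * (w (INR (i - 1) / INR n)) ^ 2) 1 n).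

Definition G_n (t x : R) (n : nat) (w : R -> R) : R :=
  exp (- (1 / 2) * (sh (2 * t / INR n) / ch (2 * t / INR n)) *
    sum_n_m (fun j =>
      (sqrt (INR n * sh (2 * t / INR n)) * w (INR j / INR n)
       + x / (ch (2 * t / INR n)) ^ j) ^ 2) 0 (n - 1)).

Definition H_n (c : R -> R -> R) (t x : R) (n : nat) (w : R -> R) : R :=
  exp (- (t / INR n) *
    sum_n_m (fun j =>
      c (INR (n - j) * t / INR n)
        (sqrt (INR n * sh (2 * t / INR n)) * w (INR j / INR n)
         + x / (ch (2 * t / INR n)) ^ j)) 0 (n - 1)).

Definition V_n (v0 : R -> R) (t x : R) (n : nat) (w : R -> R) : R :=
  v0 (sqrt (INR n * sh (2 * t / INR n)) * w 1 + x / (ch (2 * t / INR n)) ^ n).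

(* Main.v *)
Require Import Defs.
From Stdlib Require Import Reals Lra Lia.
From Coquelicot Require Import Coquelicot.
Open Scope R_scope.

Definition cl (s : R) : R := Rmax 0 (Rmin 1 s).

Lemma cl_bnd s : 0 <= cl s <= 1.
Proof. unfold cl, Rmax, Rmin; repeat destruct Rle_dec; lra. Qed.

Lemma cl_id s : 0 <= s <= 1 -> cl s = s.
Proof. intros; unfold cl, Rmax, Rmin; repeat destruct Rle_dec; lra. Qed.

Lemma cl_lip u s : Rabs (cl u - cl s) <= Rabs (u - s).
Proof.
  unfold cl, Rmax, Rmin; repeat destruct Rle_dec;
  unfold Rabs; repeat destruct Rcase_abs; lra.
Qed.

Lemma ballR (x e y : R) : ball x e y <-> Rabs (y - x) < e.
Proof. reflexivity. Qed.

Lemma cont_cl_comp (w : R -> R) :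
  (forall s, 0 <= s <= 1 ->
     filterlim w (within (fun u => 0 <= u <= 1) (locally s)) (locally (w s))) ->
  forall z, continuous (fun s => w (cl s)) z.
Proof.
  intros Hw z. unfold continuous.
  eapply filterlim_comp; [| apply (Hw _ (cl_bnd z))].
  intros P [eps Heps]. exists eps. intros y Hy.
  apply Heps; [|apply cl_bnd]. change (Rabs (cl y - cl z) < eps). change (Rabs (y - z) < eps) in Hy.
  pose proof (cl_lip y z). lra.
Qed.

Lemma INR_div_bnd i n : (i <= n)%nat -> 0 <= INR i / INR n <= 1.
Proof.
  intros H. destruct n.
  - assert (i = 0)%nat by lia. subst. simpl. unfold Rdiv. rewrite Rinv_0, Rmult_0_l. lra.
  - assert (0 < INR (S n)) by (apply lt_0_INR; lia).
    assert (INR i <= INR (S n)) by (apply le_INR; lia).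
    split. apply Rdiv_le_0_compat; auto. apply pos_INR.
    unfold Rdiv. apply Rmult_le_reg_r with (INR (S n)); auto. rewrite Rmult_assoc, Rinv_l; lra.
Qed.

Lemma cosh_ge1 y : 1 <= cosh y.
Proof. unfold cosh. pose proof (exp_ineq1_le y). pose proof (exp_ineq1_le (-y)). lra. Qed.



Lemma exp_le x y : x <= y -> exp x <= exp y.
Proof. intros [H|H]. left; apply exp_increasing; auto. subst; lra. Qed.

Lemma sinh_ge0 y : 0 <= y -> 0 <= sinh y.
Proof. intros. unfold sinh. pose proof (exp_le (-y) y ltac:(lra)). lra. Qed.

Lemma exp_pow_n a n : exp a ^ n = exp (INR n * a).
Proof.
  induction n. simpl. rewrite Rmult_0_l, exp_0. reflexivity.
  rewrite S_INR. change (exp a ^ S n) with (exp a * exp a ^ n).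
  rewrite IHn, <- exp_plus. f_equal. ring.
Qed.

Lemma sumS (f : nat -> R) m : sum_n_m f 0 (S m) = sum_n_m f 0 m + f (S m).
Proof. rewrite sum_n_Sm; [reflexivity|lia]. Qed.

Lemma sum0 (f : nat -> R) : sum_n_m f 0 0 = f 0%nat.
Proof. apply sum_n_n. Qed.

Lemma sum_abs_bound (f : nat -> R) e m :
  (forall j, (j <= m)%nat -> Rabs (f j) <= e) ->
  Rabs (sum_n_m f 0 m) <= INR (S m) * e.
Proof.
  induction m; intros H.
  - rewrite sum0. simpl. rewrite Rmult_1_l. apply H; lia.
  - rewrite sumS, S_INR. eapply Rle_trans. apply Rabs_triang.
    rewrite Rmult_plus_distr_r, Rmult_1_l. apply Rplus_le_compat.
    apply IHm; intros; apply H; lia. apply H; lia.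
Qed.

Lemma sum_lower (f : nat -> R) e m :
  (forall j, (j <= m)%nat -> e <= f j) -> INR (S m) * e <= sum_n_m f 0 m.
Proof.
  induction m; intros H.
  - rewrite sum0. simpl. rewrite Rmult_1_l. apply H; lia.
  - rewrite sumS, (S_INR (S m)). rewrite Rmult_plus_distr_r, Rmult_1_l. apply Rplus_le_compat.
    apply IHm; intros; apply H; lia. apply H; lia.
Qed.

Lemma sum_upper (f : nat -> R) e m :
  (forall j, (j <= m)%nat -> f j <= e) -> sum_n_m f 0 m <= INR (S m) * e.
Proof.
  induction m; intros H.
  - rewrite sum0. simpl. rewrite Rmult_1_l. apply H; lia.
  - rewrite sumS, (S_INR (S m)). rewrite Rmult_plus_distr_r, Rmult_1_l. apply Rplus_le_compat.
    apply IHm; intros; apply H; lia. apply H; lia.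
Qed.

Lemma sum_minus (f g : nat -> R) m :
  sum_n_m (fun j => f j - g j) 0 m = sum_n_m f 0 m - sum_n_m g 0 m.
Proof. induction m. - rewrite !sum0; reflexivity. - rewrite !sumS, IHm. lra. Qed.

Lemma ev_ge1 : eventually (fun n : nat => (1 <= n)%nat).
Proof. exists 1%nat. auto. Qed.

Lemma lim_inv_n : is_lim_seq (fun n => / INR n) 0.
Proof.
  replace (Finite 0) with (Rbar_inv p_infty) by reflexivity.
  apply is_lim_seq_inv. apply is_lim_seq_INR. discriminate.
Qed.

Lemma lim_c_n c : is_lim_seq (fun n => c / INR n) 0.
Proof.
  replace 0 with (c * 0) by ring. apply is_lim_seq_mult'.
  apply is_lim_seq_const. apply lim_inv_n.
Qed.

Lemma deriv_seq f l c : derivable_pt_lim f 0 l -> 0 < c ->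
  is_lim_seq (fun n => INR n * (f (c / INR n) - f 0)) (c * l).
Proof.
  intros Hd Hc. apply is_lim_seq_spec. intros eps.
  assert (He : 0 < eps / c) by (apply Rdiv_lt_0_compat; [apply cond_pos|auto]).
  destruct (Hd _ He) as [delta Hdel].
  pose proof (proj2 (is_lim_seq_spec _ _) (lim_c_n c) delta) as Hev.
  generalize (filter_and _ _ Hev ev_ge1). apply filter_imp.
  intros n [Hn H1]. rewrite Rminus_0_r in Hn.
  assert (Hn0 : 0 < INR n) by (apply lt_0_INR; lia).
  assert (Hh : c / INR n <> 0) by (apply Rgt_not_eq, Rdiv_lt_0_compat; auto).
  specialize (Hdel _ Hh Hn). rewrite Rplus_0_l in Hdel.
  replace (INR n * (f (c / INR n) - f 0) - c * l)
    with (c * ((f (c / INR n) - f 0) / (c / INR n) - l)) by (field; lra).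
  rewrite Rabs_mult, (Rabs_right c) by lra.
  apply Rmult_lt_reg_l with (/ c). apply Rinv_0_lt_compat; auto.
  rewrite <- Rmult_assoc, Rinv_l, Rmult_1_l by lra.
  rewrite Rmult_comm. exact Hdel.
Qed.

Lemma cosh0 : cosh 0 = 1.
Proof. unfold cosh. rewrite Ropp_0, exp_0. field. Qed.
Lemma sinh0 : sinh 0 = 0.
Proof. unfold sinh. rewrite Ropp_0, exp_0. field. Qed.

Lemma exR (g : R -> R) : (forall z, continuous g z) -> forall a b, ex_RInt g a b.
Proof. intros Hg a b. apply (@ex_RInt_continuous R_CompleteNormedModule). intros; apply Hg. Qed.

Lemma piece (g : R -> R) (Hg : forall z, continuous g z) (e delta : R) :
  (forall x y, 0 <= x <= 1 -> 0 <= y <= 1 -> Rabs (y - x) < delta -> Rabs (g y - g x) < e) ->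
  forall a b, 0 <= a -> a <= b -> b <= 1 -> b - a < delta ->
  Rabs (RInt g a b - (b - a) * g a) <= (b - a) * e.
Proof.
  intros Hu a b Ha Hab Hb Hd.
  assert (E : RInt (fun s => g s - g a) a b = RInt g a b - (b - a) * g a).
  { rewrite (RInt_minus g (fun _ => g a)); [| apply exR; auto | apply ex_RInt_const].
    rewrite RInt_const. reflexivity. }
  rewrite <- E. apply abs_RInt_le_const; auto.
  apply (ex_RInt_minus g (fun _ => g a)); [apply exR; auto | apply ex_RInt_const].
  intros s Hs. left. apply Hu; try lra. rewrite Rabs_right; lra.
Qed.

Lemma riemann (g : R -> R) : (forall z, continuous g z) ->
  is_lim_seq (fun n => / INR n * sum_n_m (fun j => g (INR j / INR n)) 0 (n - 1))
    (RInt g 0 1).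
Proof.
  intros Hg. apply is_lim_seq_spec. intros eps.
  assert (He2 : 0 < eps / 2) by (generalize (cond_pos eps); lra).
  destruct (unifcont_normed_1d g 0 1 (fun x _ => Hg x) (mkposreal _ He2)) as [delta Hdel].
  assert (Hu : forall x y, 0 <= x <= 1 -> 0 <= y <= 1 -> Rabs (y - x) < delta ->
             Rabs (g y - g x) < eps / 2).
  { intros x y Hx Hy Hxy. apply (Hdel x y Hx Hy Hxy). }
  pose proof (proj2 (is_lim_seq_spec _ _) lim_inv_n delta) as Hev.
  generalize (filter_and _ _ Hev ev_ge1). apply filter_imp.
  intros n [Hn H1]. rewrite Rminus_0_r in Hn.
  assert (Hn0 : 0 < INR n) by (apply lt_0_INR; lia).
  rewrite Rabs_right in Hn by (left; apply Rinv_0_lt_compat; auto).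
  assert (Claim : forall k, (k < n)%nat ->
    Rabs (RInt g 0 (INR (S k) / INR n) - / INR n * sum_n_m (fun j => g (INR j / INR n)) 0 k)
      <= INR (S k) / INR n * (eps / 2)).
  { induction k; intros Hk.
    - rewrite sum0. pose proof (INR_div_bnd 1 n ltac:(lia)).
      pose proof (piece g Hg (eps/2) delta Hu 0 (INR 1 / INR n) ltac:(lra) ltac:(lra) ltac:(lra)) as P.
      replace (INR 0 / INR n) with 0 in * by (simpl; field; lra).
      replace (INR 1 / INR n - 0) with (/ INR n) in P by (simpl; field; lra).
      simpl INR in *. replace (1 / INR n) with (/ INR n) in * by (field; lra). apply P. simpl. lra.
    - specialize (IHk ltac:(lia)).
      pose proof (INR_div_bnd (S k) n ltac:(lia)).
      pose proof (INR_div_bnd (S (S k)) n ltac:(lia)).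
      assert (Ed : INR (S (S k)) / INR n - INR (S k) / INR n = / INR n).
      { rewrite (S_INR (S k)). field. lra. }
      assert (0 < / INR n) by (apply Rinv_0_lt_compat; auto).
      pose proof (piece g Hg (eps/2) delta Hu (INR (S k) / INR n) (INR (S (S k)) / INR n)
        ltac:(lra) ltac:(lra) ltac:(lra) ltac:(lra)) as P.
      rewrite Ed in P.
      rewrite <- (RInt_Chasles g 0 (INR (S k) / INR n)) by (apply exR; auto).
      rewrite sumS.
      change (plus ?a ?b) with (a + b).
      replace (INR (S (S k)) / INR n * (eps / 2))
        with (INR (S k) / INR n * (eps / 2) + / INR n * (eps / 2)) by (rewrite (S_INR (S k)); field; lra).
      eapply Rle_trans; [|apply Rplus_le_compat; [exact IHk | exact P]].
      eapply Rle_trans; [|apply Rabs_triang]. right. f_equal. lra. }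
  specialize (Claim (n - 1)%nat ltac:(lia)).
  replace (S (n - 1)) with n in Claim by lia.
  replace (INR n / INR n) with 1 in Claim by (field; lra).
  rewrite <- Rabs_Ropp. replace (- _) with (RInt g 0 1 - / INR n * sum_n_m (fun j => g (INR j / INR n)) 0 (n - 1)) by ring.
  eapply Rle_lt_trans. exact Claim. generalize (cond_pos eps). lra.
Qed.

Lemma avg_close (u v : nat -> nat -> R) e (L : R) :
  (forall n, (1 <= n)%nat -> forall j, (j <= n - 1)%nat -> Rabs (u n j - v n j) <= e n) ->
  is_lim_seq e 0 ->
  is_lim_seq (fun n => / INR n * sum_n_m (v n) 0 (n-1)) L ->
  is_lim_seq (fun n => / INR n * sum_n_m (u n) 0 (n-1)) L.
Proof.
  intros Hb He Hv.
  apply is_lim_seq_ext with (fun n => / INR n * sum_n_m (v n) 0 (n-1) +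
     (/ INR n * sum_n_m (u n) 0 (n-1) - / INR n * sum_n_m (v n) 0 (n-1))).
  { intros n. ring. }
  replace L with (L + 0) by ring. apply is_lim_seq_plus'; auto.
  apply is_lim_seq_le_le_loc with (fun n => - e n) e; auto.
  - generalize ev_ge1. apply filter_imp. intros n H1.
    assert (Hn0 : 0 < INR n) by (apply lt_0_INR; lia).
    rewrite <- Rmult_minus_distr_l, <- sum_minus.
    pose proof (sum_abs_bound (fun j => u n j - v n j) (e n) (n-1) (Hb n H1)) as HS.
    replace (S (n-1)) with n in HS by lia.
    apply Rabs_le_between. rewrite Rabs_mult, Rabs_right by (left; apply Rinv_0_lt_compat; auto).
    apply Rmult_le_reg_l with (INR n); auto.
    rewrite <- Rmult_assoc, Rinv_r, Rmult_1_l by lra. exact HS.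
  - replace 0 with (- 0) by ring.
    apply (is_lim_seq_opp e 0). auto.
Qed.

Lemma L_sh t : 0 < t -> is_lim_seq (fun n => INR n * sh (2 * t / INR n)) (2 * t).
Proof.
  intros Ht. pose proof (deriv_seq sinh (cosh 0) (2*t) (derivable_pt_lim_sinh 0) ltac:(lra)) as H.
  rewrite cosh0, Rmult_1_r in H. eapply is_lim_seq_ext; [|exact H].
  intros n. unfold sh. rewrite sinh0, Rminus_0_r. reflexivity.
Qed.

Lemma L_ch1 t : 0 < t -> is_lim_seq (fun n => INR n * (ch (2 * t / INR n) - 1)) 0.
Proof.
  intros Ht. pose proof (deriv_seq cosh (sinh 0) (2*t) (derivable_pt_lim_cosh 0) ltac:(lra)) as H.
  rewrite sinh0, Rmult_0_r in H. eapply is_lim_seq_ext; [|exact H].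
  intros n. unfold ch. rewrite cosh0. reflexivity.
Qed.

Lemma L_ch t : is_lim_seq (fun n => ch (2 * t / INR n)) 1.
Proof.
  rewrite <- cosh0. apply (is_lim_seq_continuous cosh).
  apply derivable_continuous_pt. exists (sinh 0). apply derivable_pt_lim_cosh.
  apply lim_c_n.
Qed.

Lemma exp_cont_pt y : continuity_pt exp y.
Proof. apply continuity_pt_filterlim. apply continuous_exp. Qed.

Lemma L_chn t : 0 < t -> is_lim_seq (fun n => ch (2 * t / INR n) ^ n) 1.
Proof.
  intros Ht.
  apply is_lim_seq_le_le with (fun _ => 1) (fun n => exp (INR n * (ch (2 * t / INR n) - 1))).
  - intros n. pose proof (cosh_ge1 (2 * t / INR n)). unfold ch. split.
    apply pow_R1_Rle; auto.
    rewrite <- exp_pow_n. apply pow_incr. split. lra.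
    pose proof (exp_ineq1_le (cosh (2 * t / INR n) - 1)). lra.
  - apply is_lim_seq_const.
  - pose proof (is_lim_seq_continuous exp _ 0 (exp_cont_pt 0) (L_ch1 t Ht)) as H.
    rewrite exp_0 in H. exact H.
Qed.

Lemma L_sq t : 0 < t -> is_lim_seq (fun n => sqrt (INR n * sh (2 * t / INR n))) (sqrt (2 * t)).
Proof.
  intros Ht. apply (is_lim_seq_continuous sqrt). apply continuity_pt_sqrt. lra.
  apply L_sh; auto.
Qed.

Lemma xdiff x p q : 1 <= p <= q -> Rabs (x / p - x) <= Rabs x * (q - 1).
Proof.
  intros Hp. replace (x / p - x) with (x * (1 / p - 1)) by (field; lra).
  rewrite Rabs_mult. apply Rmult_le_compat_l. apply Rabs_pos.
  assert (0 < 1 / p <= 1). { split. apply Rdiv_lt_0_compat; lra.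
    unfold Rdiv. rewrite Rmult_1_l. rewrite <- Rinv_1. apply Rinv_le_contravar; lra. }
  assert (1 - 1/p <= p - 1).
  { assert (p * (1/p) = 1) by (field; lra). nra. }
  rewrite Rabs_left1 by lra. lra.
Qed.

Lemma chpow_bnd h j n : (j <= n)%nat -> 1 <= ch h ^ j <= ch h ^ n.
Proof.
  intros. pose proof (cosh_ge1 h). unfold ch. split. apply pow_R1_Rle; auto.
  apply Rle_pow; auto.
Qed.

Lemma sq_bnd y W : Rabs y <= W -> 0 <= y ^ 2 <= W ^ 2.
Proof. intros H. pose proof (Rabs_pos y). rewrite <- (pow2_abs y). split. nra. nra. Qed.

Lemma telesc (v : nat -> R) p q n :
  sum_n_m (fun i => p * (v (i-1)%nat - v i) + q * v (i-1)%nat) 1 n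
  = p * (v 0%nat - v n) + q * sum_n_m (fun i => v (i-1)%nat) 1 n.
Proof.
  induction n.
  - rewrite !sum_n_m_zero by lia. change (@zero R_AbelianMonoid) with 0. lra.
  - rewrite !sum_n_Sm by lia. change (plus ?a ?b) with (a + b). rewrite IHn.
    replace (S n - 1)%nat with n by lia. lra.
Qed.

Lemma sum1_bnd (f : nat -> R) lo hi n :
  (forall k, lo <= f k <= hi) ->
  INR n * lo <= sum_n_m f 1 n <= INR n * hi.
Proof.
  intros H. replace (INR n) with (INR (S n - 1)) by (f_equal; lia).
  rewrite <- !sum_n_m_const. split; apply sum_n_m_le; intros k; apply H.
Qed.

Lemma Fexp_bnd t w W n : 0 < t -> (forall s, Rabs (w s) <= W) -> w 0 = 0 -> (1 <= n)%nat ->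
  let b := INR n * (ch (2 * t / INR n) - 1) in
  - (1/2) * (b * W ^ 2 + b ^ 2 * W ^ 2) <=
  INR n / 2 *
    sum_n_m (fun i =>
      (1 - ch (2 * t / INR n)) * (w (INR i / INR n)) ^ 2
      + (1 - / ch (2 * t / INR n)) * (w (INR (i - 1) / INR n)) ^ 2) 1 n <= 0.
Proof.
  intros Ht Hw H0 H1 b.
  set (C := ch (2 * t / INR n)).
  assert (HC : 1 <= C) by apply cosh_ge1.
  assert (Hn0 : 0 < INR n) by (apply lt_0_INR; lia).
  set (u := fun i : nat => w (INR i / INR n) ^ 2).
  set (a := C - 1).
  rewrite (sum_n_m_ext _ (fun i => a * (u (i-1)%nat - u i) + (- (a^2 / C)) * u (i-1)%nat)).
  2:{ intros i. unfold u, a. match goal with |- ?l = ?r => change (@eq R l r) end. field. lra. }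
  rewrite telesc.
  assert (Hu0 : u 0%nat = 0). { unfold u. simpl. unfold Rdiv. rewrite Rmult_0_l, H0. ring. }
  assert (Hun : 0 <= u n <= W ^ 2) by (apply sq_bnd; auto).
  pose proof (sum1_bnd (fun i => u (i-1)%nat) 0 (W^2) n (fun k => sq_bnd _ _ (Hw _))) as HS.
  rewrite Hu0. set (S := sum_n_m (fun i : nat => u (i - 1)%nat) 1 n) in *.
  assert (Hb : b = INR n * a) by reflexivity.
  assert (Ha : 0 <= a) by (unfold a; lra).
  assert (HaC : 0 <= a ^ 2 / C <= a ^ 2).
  { split. apply Rdiv_le_0_compat; nra.
    unfold Rdiv. rewrite <- (Rmult_1_r (a^2)) at 2. apply Rmult_le_compat_l. nra.
    rewrite <- Rinv_1. apply Rinv_le_contravar; lra. }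
  assert (0 <= a^2 / C * S <= a^2 * (INR n * W^2)).
  { split. apply Rmult_le_pos; lra. apply Rmult_le_compat; lra. }
  assert (HP : 0 <= a * u n <= a * W ^ 2) by (split; [apply Rmult_le_pos|apply Rmult_le_compat_l]; lra).
  assert (0 <= INR n * (a * u n) <= INR n * (a * W ^ 2)) by (split; [apply Rmult_le_pos|apply Rmult_le_compat_l]; lra).
  assert (0 <= INR n * (a ^ 2 / C * S) <= INR n * (a ^ 2 * (INR n * W ^ 2))) by (split; [apply Rmult_le_pos|apply Rmult_le_compat_l]; lra).
  rewrite Hb. split; nra.
Qed.

Lemma lim_poly (b : nat -> R) A B : is_lim_seq b 0 ->
  is_lim_seq (fun n => A * b n + B * b n ^ 2) 0.
Proof.
  intros Hb. apply is_lim_seq_ext with (fun n => A * b n + B * (b n * b n)).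
  intros; ring.
  replace 0 with (A * 0 + B * (0 * 0)) by ring.
  apply is_lim_seq_plus'; apply is_lim_seq_mult'; try apply is_lim_seq_const; auto.
  apply is_lim_seq_mult'; auto.
Qed.

Lemma lim_exp (u : nat -> R) (l : R) : is_lim_seq u l -> is_lim_seq (fun n => exp (u n)) (exp l).
Proof. intros H. exact (is_lim_seq_continuous exp u l (exp_cont_pt l) H). Qed.

Lemma partF t w W : 0 < t -> (forall s, Rabs (w s) <= W) -> w 0 = 0 ->
  (forall n, (1 <= n)%nat -> 0 <= F_n t n w <= 1) /\ is_lim_seq (fun n => F_n t n w) 1.
Proof.
  intros Ht Hw H0. split.
  - intros n H1. unfold F_n. pose proof (Fexp_bnd t w W n Ht Hw H0 H1) as HB. cbv zeta in HB.
    split. left; apply exp_pos. apply Rle_trans with (exp 0); [apply exp_le; lra | rewrite exp_0; lra].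
  - unfold F_n. replace (Finite 1) with (Finite (exp 0)) by (rewrite exp_0; auto). apply lim_exp.
    apply is_lim_seq_le_le_loc with
      (fun n => (-(1/2) * W^2) * (INR n * (ch (2 * t / INR n) - 1))
                + (-(1/2) * W^2) * (INR n * (ch (2 * t / INR n) - 1)) ^ 2) (fun _ => 0).
    + generalize ev_ge1. apply filter_imp. intros n H1.
      pose proof (Fexp_bnd t w W n Ht Hw H0 H1) as HB. cbv zeta in HB. split; [|lra].
      eapply Rle_trans; [|apply HB]. right; ring.
    + apply lim_poly. apply L_ch1; auto.
    + apply is_lim_seq_const.
Qed.

Lemma cont_lin (w : R -> R) a k : (forall z, continuous w z) -> forall z, continuous (fun s => a + k * w s) z.
Proof.
  intros Hw z. apply continuity_pt_filterlim.
  change (continuity_pt (plus_fct (fct_cte a) (mult_fct (fct_cte k) w)) z).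
  apply continuity_pt_plus. apply continuity_pt_const. intros u v; reflexivity.
  apply continuity_pt_mult. apply continuity_pt_const. intros u v; reflexivity.
  apply continuity_pt_filterlim. apply Hw.
Qed.

Lemma cont_sq (f : R -> R) : (forall z, continuous f z) -> forall z, continuous (fun s => f s ^ 2) z.
Proof.
  intros Hf z. apply (continuous_comp f (fun y => y ^ 2)). apply Hf.
  apply continuity_pt_filterlim. apply derivable_continuous_pt. apply derivable_pt_pow.
Qed.

Lemma sqdiff A B d B0 : Rabs (A - B) <= d -> Rabs B <= B0 ->
  Rabs (A ^ 2 - B ^ 2) <= d * (d + 2 * B0).
Proof.
  intros H1 H2. replace (A ^ 2 - B ^ 2) with ((A - B) * ((A - B) + 2 * B)) by ring.
  rewrite Rabs_mult. apply Rmult_le_compat; try apply Rabs_pos; auto.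
  eapply Rle_trans. apply Rabs_triang. rewrite Rabs_mult, (Rabs_right 2) by lra. lra.
Qed.

Lemma diff_arg t x w W n j : (forall s, Rabs (w s) <= W) -> (j <= n)%nat ->
  Rabs ((sqrt (INR n * sh (2 * t / INR n)) * w (INR j / INR n) + x / ch (2 * t / INR n) ^ j)
        - (sqrt (2 * t) * w (INR j / INR n) + x))
  <= Rabs (sqrt (INR n * sh (2 * t / INR n)) - sqrt (2 * t)) * W
     + Rabs x * (ch (2 * t / INR n) ^ n - 1).
Proof.
  intros Hw Hj.
  replace (sqrt (INR n * sh (2 * t / INR n)) * w (INR j / INR n) + x / ch (2 * t / INR n) ^ j -
    (sqrt (2 * t) * w (INR j / INR n) + x)) with
    ((sqrt (INR n * sh (2 * t / INR n)) - sqrt (2 * t)) * w (INR j / INR n) +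
     (x / ch (2 * t / INR n) ^ j - x)) by ring.
  eapply Rle_trans. apply Rabs_triang. apply Rplus_le_compat.
  rewrite Rabs_mult. apply Rmult_le_compat_l. apply Rabs_pos. apply Hw.
  apply xdiff. apply chpow_bnd; auto.
Qed.

Lemma lim_d t x W : 0 < t ->
  is_lim_seq (fun n => Rabs (sqrt (INR n * sh (2 * t / INR n)) - sqrt (2 * t)) * W
     + Rabs x * (ch (2 * t / INR n) ^ n - 1)) 0.
Proof.
  intros Ht. replace 0 with (Rabs (sqrt (2*t) - sqrt (2*t)) * W + Rabs x * (1 - 1))
    by (rewrite Rminus_diag, Rabs_R0; ring).
  apply is_lim_seq_plus'; apply is_lim_seq_mult'; try apply is_lim_seq_const.
  - apply (is_lim_seq_abs _ (sqrt (2*t) - sqrt (2*t))).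
    apply is_lim_seq_minus'. apply L_sq; auto. apply is_lim_seq_const.
  - apply is_lim_seq_minus'. apply L_chn; auto. apply is_lim_seq_const.
Qed.

Lemma lim_e (d : nat -> R) B0 : is_lim_seq d 0 -> is_lim_seq (fun n => d n * (d n + 2 * B0)) 0.
Proof.
  intros H. replace 0 with (0 * (0 + 2 * B0)) by ring.
  apply is_lim_seq_mult'; auto. apply is_lim_seq_plus'; auto. apply is_lim_seq_const.
Qed.

Lemma L_tanh t : 0 < t -> is_lim_seq (fun n => INR n * sh (2 * t / INR n) * / ch (2 * t / INR n)) (2 * t).
Proof.
  intros Ht. replace (Finite (2 * t)) with (Finite (2 * t * / 1)) by (f_equal; field).
  apply is_lim_seq_mult'. apply L_sh; auto.
  apply (is_lim_seq_inv _ 1). apply L_ch. intro H; injection H; lra.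
Qed.

Lemma partG t x w W : 0 < t -> (forall z, continuous w z) -> (forall s, Rabs (w s) <= W) ->
  (forall n, (1 <= n)%nat -> 0 <= G_n t x n w <= 1) /\
  is_lim_seq (fun n => G_n t x n w)
    (exp (- t * RInt (fun s => (x + sqrt (2 * t) * w s) ^ 2) 0 1)).
Proof.
  intros Ht Hc Hw. split.
  - intros n H1. unfold G_n. split. left; apply exp_pos.
    apply Rle_trans with (exp 0); [apply exp_le | rewrite exp_0; lra].
    assert (Hn0 : 0 < INR n) by (apply lt_0_INR; lia).
    pose proof (cosh_ge1 (2 * t / INR n)).
    assert (0 <= sh (2 * t / INR n)) by (apply sinh_ge0; apply Rdiv_le_0_compat; lra).
    assert (0 <= sh (2 * t / INR n) / ch (2 * t / INR n)) by (apply Rdiv_le_0_compat; unfold ch; lra).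
    pose proof (sum_lower (fun j => (sqrt (INR n * sh (2 * t / INR n)) * w (INR j / INR n) +
       x / ch (2 * t / INR n) ^ j) ^ 2) 0 (n-1) (fun j _ => pow2_ge_0 _)).
    rewrite Rmult_0_r in H3.
    assert (0 <= sh (2 * t / INR n) / ch (2 * t / INR n) * sum_n_m (fun j => (sqrt (INR n * sh (2 * t / INR n)) * w (INR j / INR n) +
       x / ch (2 * t / INR n) ^ j) ^ 2) 0 (n-1)) by (apply Rmult_le_pos; auto).
    lra.
  - unfold G_n. apply lim_exp.
    set (Iv := RInt (fun s => (x + sqrt (2 * t) * w s) ^ 2) 0 1).
    apply is_lim_seq_ext_loc with (fun n => - (1/2) *
       ((INR n * sh (2 * t / INR n) * / ch (2 * t / INR n)) *
        (/ INR n * sum_n_m (fun j => (sqrt (INR n * sh (2 * t / INR n)) * w (INR j / INR n) +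
       x / ch (2 * t / INR n) ^ j) ^ 2) 0 (n-1)))).
    { generalize ev_ge1. apply filter_imp. intros n H1.
      assert (Hn0 : 0 < INR n) by (apply lt_0_INR; lia).
      pose proof (cosh_ge1 (2 * t / INR n)).
      match goal with |- context [sum_n_m ?f ?a ?b] => generalize (sum_n_m f a b : R) end.
      intro S0. field. unfold ch; lra. }
    replace (- t * Iv) with (- (1/2) * (2 * t * Iv)) by lra.
    apply is_lim_seq_scal_l with (a := - (1/2)) (lu := Finite (2 * t * Iv)).
    apply is_lim_seq_mult'. apply L_tanh; auto.
    set (d := fun n => Rabs (sqrt (INR n * sh (2 * t / INR n)) - sqrt (2 * t)) * W
     + Rabs x * (ch (2 * t / INR n) ^ n - 1)).
    apply (avg_close _ (fun n j => (x + sqrt (2 * t) * w (INR j / INR n)) ^ 2)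
            (fun n => d n * (d n + 2 * (sqrt (2 * t) * W + Rabs x)))).
    + intros n H1 j Hj. apply sqdiff.
      replace (x + sqrt (2 * t) * w (INR j / INR n)) with (sqrt (2 * t) * w (INR j / INR n) + x) by ring.
      apply diff_arg; auto; lia.
      pose proof (Hw (INR j / INR n)). pose proof (sqrt_pos (2*t)).
      eapply Rle_trans. apply Rabs_triang. rewrite Rabs_mult, (Rabs_right (sqrt (2*t))) by lra.
      assert (sqrt (2*t) * Rabs (w (INR j / INR n)) <= sqrt (2*t) * W) by (apply Rmult_le_compat_l; lra). lra.
    + apply lim_e. apply lim_d; auto.
    + apply (riemann (fun s => (x + sqrt (2 * t) * w s) ^ 2)).
      apply (cont_sq (fun s => x + sqrt (2 * t) * w s)). apply cont_lin; auto.
Qed.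

Lemma lip_c (c cx : R -> R -> R) K s y1 y2 : 0 < s ->
  (forall s y, 0 < s -> is_derive (fun z => c s z) y (cx s y)) ->
  (forall y, Rabs (cx s y) <= K) -> Rabs (c s y1 - c s y2) <= K * Rabs (y1 - y2).
Proof.
  intros Hs Hd HK.
  destruct (MVT_abs (fun z => c s z) (fun z => cx s z) y2 y1) as [z [Hz _]].
  { intros; apply is_derive_Reals; auto. }
  rewrite Hz. apply Rmult_le_compat_r. apply Rabs_pos. apply HK.
Qed.

Lemma cont_cl z : continuous cl z.
Proof.
  apply filterlim_locally. intros eps. exists eps. intros y Hy.
  change (Rabs (cl y - cl z) < eps). change (Rabs (y - z) < eps) in Hy.
  pose proof (cl_lip y z). lra.
Qed.

Lemma cont_g (c : R -> R -> R) t x (w : R -> R) : 0 < t -> cont_halfplane c ->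
  (forall z, continuous w z) ->
  forall z, continuous (fun s => c (t + - t * cl s) (x + sqrt (2 * t) * w s)) z.
Proof.
  intros Ht Hc Hw z.
  set (f1 := fun s => t + - t * cl s). set (f2 := fun s => x + sqrt (2 * t) * w s).
  assert (H1 : continuous f1 z) by (apply cont_lin; apply cont_cl).
  assert (H2 : continuous f2 z) by (apply cont_lin; auto).
  assert (D : 0 <= f1 z) by (unfold f1; pose proof (cl_bnd z); nra).
  unfold continuous.
  apply (filterlim_comp _ _ _ (fun s => (f1 s, f2 s)) (fun p : R * R => c (fst p) (snd p))
          _ (within (fun p : R * R => 0 <= fst p) (locally (f1 z, f2 z)))).
  2:{ apply (Hc (f1 z) (f2 z) D). }
  intros P [eps HP].
  pose proof (proj1 (filterlim_locally _ _) H1 eps) as E1.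
  pose proof (proj1 (filterlim_locally _ _) H2 eps) as E2.
  change (locally z (fun s => P (f1 s, f2 s))).
  generalize (filter_and _ _ E1 E2). apply filter_imp. intros s [B1 B2].
  apply HP. split; auto. simpl. unfold f1. pose proof (cl_bnd s). nra.
Qed.



Lemma partH t x m (c cx : R -> R -> R) w W : 0 < t -> cont_halfplane c ->
  (forall s y, 0 <= s -> m <= c s y) ->
  (forall s y, 0 < s -> is_derive (fun z => c s z) y (cx s y)) ->
  (exists K, forall s y, 0 <= s -> Rabs (cx s y) <= K) ->
  (forall z, continuous w z) -> (forall s, Rabs (w s) <= W) ->
  (forall n, (1 <= n)%nat -> 0 <= H_n c t x n w <= exp (- m * t)) /\
  is_lim_seq (fun n => H_n c t x n w)
    (exp (- t * RInt (fun s => c (t + - t * cl s) (x + sqrt (2 * t) * w s)) 0 1)).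
Proof.
  intros Ht Hc Hm Hd [K HK] Hw HW. split.
  - intros n H1. unfold H_n. split. left; apply exp_pos. apply exp_le.
    assert (Hn0 : 0 < INR n) by (apply lt_0_INR; lia).
    match goal with |- context [sum_n_m ?f 0 (n - 1)] =>
      pose proof (sum_lower f m (n-1)) as HS end.
    replace (S (n-1)) with n in HS by lia.
    assert (INR n * m <= sum_n_m (fun j : nat =>
        c (INR (n - j) * t / INR n)
          (sqrt (INR n * sh (2 * t / INR n)) * w (INR j / INR n) +
           x / ch (2 * t / INR n) ^ j)) 0 (n - 1)).
    { apply HS. intros j Hj. apply Hm. apply Rdiv_le_0_compat; auto.
      apply Rmult_le_pos. apply pos_INR. lra. }
    revert H. generalize (sum_n_m (fun j : nat =>
        c (INR (n - j) * t / INR n)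
          (sqrt (INR n * sh (2 * t / INR n)) * w (INR j / INR n) +
           x / ch (2 * t / INR n) ^ j)) 0 (n - 1) : R). intros S0 HS0.
    assert (t / INR n * (INR n * m) <= t / INR n * S0).
    { apply Rmult_le_compat_l; auto. apply Rdiv_le_0_compat; lra. }
    replace (t / INR n * (INR n * m)) with (m * t) in H by (field; lra). lra.
  - unfold H_n. apply lim_exp.
    apply is_lim_seq_ext_loc with (fun n => - t * (/ INR n * sum_n_m (fun j : nat =>
        c (INR (n - j) * t / INR n)
          (sqrt (INR n * sh (2 * t / INR n)) * w (INR j / INR n) +
           x / ch (2 * t / INR n) ^ j)) 0 (n - 1))).
    { generalize ev_ge1. apply filter_imp. intros n H1.
      assert (Hn0 : 0 < INR n) by (apply lt_0_INR; lia).
      match goal with |- context [sum_n_m ?f ?a ?b] => generalize (sum_n_m f a b : R) end.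
      intro S0. field. lra. }
    apply is_lim_seq_scal_l with (a := - t)
      (lu := Finite (RInt (fun s => c (t + - t * cl s) (x + sqrt (2 * t) * w s)) 0 1)).
    assert (HK0 : 0 <= K) by (pose proof (HK 0 0 (Rle_refl 0)); pose proof (Rabs_pos (cx 0 0)); lra).
    set (d := fun n => Rabs (sqrt (INR n * sh (2 * t / INR n)) - sqrt (2 * t)) * W
     + Rabs x * (ch (2 * t / INR n) ^ n - 1)).
    apply (avg_close _ (fun n j => c (t + - t * cl (INR j / INR n)) (x + sqrt (2 * t) * w (INR j / INR n)))
            (fun n => K * d n)).
    + intros n H1 j Hj. 
      assert (Hn0 : 0 < INR n) by (apply lt_0_INR; lia).
      assert (E : INR (n - j) * t / INR n = t + - t * cl (INR j / INR n)).
      { rewrite cl_id by (apply INR_div_bnd; lia). rewrite minus_INR by lia. field. lra. }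
      assert (Pos : 0 < INR (n - j) * t / INR n).
      { apply Rdiv_lt_0_compat; auto. apply Rmult_lt_0_compat; auto. apply lt_0_INR; lia. }
      rewrite <- E.
      eapply Rle_trans. apply (lip_c c cx K); auto. intros; apply HK; lra.
      apply Rmult_le_compat_l; auto.
      rewrite (Rplus_comm x). apply (diff_arg t x w W n j); auto. lia.
    + replace 0 with (K * 0) by ring. apply is_lim_seq_mult'. apply is_lim_seq_const.
      apply lim_d; auto.
    + apply (riemann (fun s => c (t + - t * cl s) (x + sqrt (2 * t) * w s))).
      apply cont_g; auto.
Qed.

Lemma sup_bound (v0 : R -> R) : (exists M, forall y, Rabs (v0 y) <= M) ->
  forall y, Rabs (v0 y) <= sup_norm v0.
Proof.
  intros [M HM] y. unfold sup_norm.
  destruct (Lub_Rbar_correct (fun r => exists y, r = Rabs (v0 y))) as [Hub Hlub].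
  assert (H1 : Rbar_le (Rabs (v0 y)) (Lub_Rbar (fun r => exists y, r = Rabs (v0 y)))).
  { apply Hub. exists y; auto. }
  assert (H2 : Rbar_le (Lub_Rbar (fun r => exists y, r = Rabs (v0 y))) M).
  { apply Hlub. intros r [z ->]. apply HM. }
  destruct (Lub_Rbar (fun r => exists y, r = Rabs (v0 y))); simpl in *; auto; contradiction.
Qed.

Lemma partV t x (v0 : R -> R) w : 0 < t -> (forall y, continuous v0 y) ->
  (exists M, forall y, Rabs (v0 y) <= M) ->
  (forall n, (1 <= n)%nat -> Rabs (V_n v0 t x n w) <= sup_norm v0) /\
  is_lim_seq (fun n => V_n v0 t x n w) (v0 (sqrt (2 * t) * w 1 + x)).
Proof.
  intros Ht Hc HM. split.
  - intros n _. apply sup_bound; auto.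
  - unfold V_n. apply is_lim_seq_continuous. apply continuity_pt_filterlim, Hc.
    apply is_lim_seq_plus'. apply is_lim_seq_mult'. apply L_sq; auto. apply is_lim_seq_const.
    replace (Finite x) with (Finite (x * / 1)) by (f_equal; field).
    apply is_lim_seq_mult'. apply is_lim_seq_const.
    apply (is_lim_seq_inv _ 1). apply L_chn; auto. intro H; injection H; lra.
Qed.

Theorem lemma1 (t x m : R) (v0 : R -> R) (c cx : R -> R -> R) :
  0 < t ->
  (* v0 continuous and bounded on R *)
  (forall y, continuous v0 y) ->
  (exists M, forall y, Rabs (v0 y) <= M) ->
  (* c continuous on [0,oo) x R with lower bound m *)
  cont_halfplane c ->
  (forall s y, 0 <= s -> m <= c s y) ->
  (* x-derivative on ]0,oo) x R, extending continuously and boundedly *)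
  (forall s y, 0 < s -> is_derive (fun z => c s z) y (cx s y)) ->
  cont_halfplane cx ->
  (exists K, forall s y, 0 <= s -> Rabs (cx s y) <= K) ->
  forall w : R -> R, in_CW w ->
  (* (i) *)
  ((forall n, (1 <= n)%nat -> 0 <= F_n t n w <= 1)
   /\ is_lim_seq (fun n => F_n t n w) 1) /\
  (* (ii) *)
  ((forall n, (1 <= n)%nat -> 0 <= G_n t x n w <= 1)
   /\ is_lim_seq (fun n => G_n t x n w)
        (exp (- t * RInt (fun s => (x + sqrt (2 * t) * w s) ^ 2) 0 1))) /\
  (* (iii) *)
  ((forall n, (1 <= n)%nat -> 0 <= H_n c t x n w <= exp (- m * t))
   /\ is_lim_seq (fun n => H_n c t x n w)
        (exp (- t * RInt (fun s => c (t * (1 - s)) (sqrt (2 * t) * w s + x)) 0 1))) /\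
  (* (iv) *)
  ((forall n, (1 <= n)%nat -> Rabs (V_n v0 t x n w) <= sup_norm v0)
   /\ is_lim_seq (fun n => V_n v0 t x n w) (v0 (sqrt (2 * t) * w 1 + x))).
Proof.
  intros Ht Hv0c Hv0b Hc Hm Hd Hcx HK w [Hcw H0].
  set (w' := fun s => w (cl s)).
  assert (Hc' : forall z, continuous w' z) by (apply cont_cl_comp; auto).
  assert (Hcl : forall s, cl (cl s) = cl s) by (intros; apply cl_id, cl_bnd).
  destruct (continuity_ab_maj (fun s => Rabs (w' s)) 0 1 ltac:(lra)) as [Mx [HMx _]].
  { intros z _. apply continuity_pt_filterlim.
    apply (continuous_comp w' Rabs). apply Hc'. apply continuous_Rabs. }
  set (W := Rabs (w' Mx)).
  assert (HW : forall s, Rabs (w' s) <= W).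
  { intros s. replace (w' s) with (w' (cl s)) by (unfold w'; rewrite Hcl; auto).
    apply HMx. apply cl_bnd. }
  assert (H0' : w' 0 = 0) by (unfold w'; rewrite cl_id by lra; auto).
  assert (pt : forall i n, (i <= n)%nat -> w (INR i / INR n) = w' (INR i / INR n)).
  { intros i n Hi. unfold w'. rewrite cl_id; auto. apply INR_div_bnd; auto. }
  assert (EF : forall n, F_n t n w' = F_n t n w).
  { intros n. unfold F_n. f_equal. f_equal. apply sum_n_m_ext_loc. intros k Hk.
    rewrite (pt k n), (pt (k-1)%nat n) by lia. reflexivity. }
  assert (EG : forall n, G_n t x n w' = G_n t x n w).
  { intros n. unfold G_n. f_equal. f_equal. apply sum_n_m_ext_loc. intros k Hk.
    rewrite (pt k n) by lia. reflexivity. }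
  assert (EH : forall n, H_n c t x n w' = H_n c t x n w).
  { intros n. unfold H_n. f_equal. f_equal. apply sum_n_m_ext_loc. intros k Hk.
    rewrite (pt k n) by lia. reflexivity. }
  assert (EV : forall n, V_n v0 t x n w' = V_n v0 t x n w).
  { intros n. unfold V_n. unfold w'. rewrite cl_id by lra. reflexivity. }
  assert (I1 : RInt (fun s => (x + sqrt (2 * t) * w' s) ^ 2) 0 1
             = RInt (fun s => (x + sqrt (2 * t) * w s) ^ 2) 0 1).
  { apply RInt_ext. intros s Hs. rewrite Rmin_left, Rmax_right in Hs by lra.
    unfold w'. rewrite cl_id by lra. reflexivity. }
  assert (I2 : RInt (fun s => c (t + - t * cl s) (x + sqrt (2 * t) * w' s)) 0 1
             = RInt (fun s => c (t * (1 - s)) (sqrt (2 * t) * w s + x)) 0 1).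
  { apply RInt_ext. intros s Hs. rewrite Rmin_left, Rmax_right in Hs by lra.
    unfold w'. rewrite cl_id by lra. f_equal; ring. }
  destruct (partF t w' W Ht HW H0') as [F1 F2].
  destruct (partG t x w' W Ht Hc' HW) as [G1 G2].
  destruct (partH t x m c cx w' W Ht Hc Hm Hd HK Hc' HW) as [H1 H2].
  destruct (partV t x v0 w Ht Hv0c Hv0b) as [V1 V2].
  rewrite I1 in G2. rewrite I2 in H2.
  split; [|split; [|split]].
  - split. intros n Hn. rewrite <- EF; auto.
    exact (is_lim_seq_ext _ _ _ EF F2).
  - split. intros n Hn. rewrite <- EG; auto.
    exact (is_lim_seq_ext _ _ _ EG G2).
  - split. intros n Hn. rewrite <- EH; auto.
    exact (is_lim_seq_ext _ _ _ EH H2).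
  - split; auto.
Qed.
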